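(* Let $X$ be a topological space in which every open set is a union of countably many clopen sets, and let $\alpha$ be an ordinal with $0<\alpha\le\omega_1$. The following are equivalent: (1) for every function $\Psi:X\to\mathbb{N}^{\mathbb{N}}$ of Baire class $\alpha$, $\Psi[X]$ is bounded; (2) for every Borel function $\Psi:X\to\mathbb{N}^{\mathbb{N}}$, $\Psi[X]$ is bounded.
   Context: Functions $X\to\mathbb{N}^{\mathbb{N}}$ of Baire class $0$ are the continuous ones; for $0<\alpha\le\omega_1$, a function is of Baire class $\alpha$ if it is the pointwise limit of a sequence of functions each of Baire class smaller than $\alpha$. The Baire class $1$ functions are exactly those for which the preimage of every open set is $F_\sigma$, and the Borel functions are exactly those of Baire class $\omega_1$. $Y\subseteq\mathbb{N}^{\mathbb{N}}$ is bounded if there is $g\in\mathbb{N}^{\mathbb{N}}$ such that each $f\in Y$ satisfies $f(n)\le g(n)$ for all but finitely many $n$. *)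

(* Defs.v *)
From Stdlib Require Import Classical.

Set Implicit Arguments.

Record topology (X : Type) := Topology {
  is_open : (X -> Prop) -> Prop;
  open_full : is_open (fun _ => True);
  open_inter : forall U V, is_open U -> is_open V -> is_open (fun x => U x /\ V x);
  open_union : forall (I : Type) (F : I -> X -> Prop),
      (forall i, is_open (F i)) -> is_open (fun x => exists i, F i x)
}.

Definition is_clopen (X : Type) (T : topology X) (U : X -> Prop) : Prop :=
  is_open T U /\ is_open T (fun x => ~ U x).

Definition open_countable_union_clopen (X : Type) (T : topology X) : Prop :=
  forall U, is_open T U ->
    exists C : nat -> X -> Prop,
      (forall n, is_clopen T (C n)) /\ (forall x, U x <-> exists n, C n x).

Definition baire := nat -> nat.

Definition agree_upto (k : nat) (g h : baire) : Prop :=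
  forall i, i < k -> g i = h i.

Definition baire_open (U : baire -> Prop) : Prop :=
  forall g, U g -> exists k, forall h, agree_upto k g h -> U h.

Definition continuous (X : Type) (T : topology X) (f : X -> baire) : Prop :=
  forall U, baire_open U -> is_open T (fun x => U (f x)).

(** pointwise convergence in N^N (product of discrete N) *)
Definition converges_pointwise (X : Type) (g : nat -> X -> baire) (f : X -> baire)
  : Prop :=
  forall x k, exists N, forall n, N <= n -> g n x k = f x k.

(** * Countable ordinals as Brouwer trees; OL f denotes sup_n f n *)
Inductive Ord : Type :=
| OZ : Ord
| OS : Ord -> Ord
| OL : (nat -> Ord) -> Ord.

Inductive ole : Ord -> Ord -> Prop :=
| ole_Z : forall b, ole OZ b
| ole_S : forall a b, olt a b -> ole (OS a) b
| ole_L : forall f b, (forall n, ole (f n) b) -> ole (OL f) b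
with olt : Ord -> Ord -> Prop :=
| olt_S : forall a b, ole a b -> olt a (OS b)
| olt_L : forall a f n, olt a (f n) -> olt a (OL f).

(** ordinals alpha with alpha <= omega_1: a countable one, or omega_1 itself *)
Inductive OrdW1 : Type :=
| Ctbl : Ord -> OrdW1
| Omega1 : OrdW1.

Definition ordW1_pos (a : OrdW1) : Prop :=
  match a with Ctbl b => olt OZ b | Omega1 => True end.

Inductive BaireClass (X : Type) (T : topology X) : Ord -> (X -> baire) -> Prop :=
| bc_zero : forall a f, ole a OZ -> continuous T f -> BaireClass T a f
| bc_lim : forall a f (b : nat -> Ord) (g : nat -> X -> baire),
    olt OZ a ->
    (forall n, olt (b n) a) ->
    (forall n, BaireClass T (b n) (g n)) ->
    converges_pointwise g f ->
    BaireClass T a f.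

Definition BaireClassW (X : Type) (T : topology X) (a : OrdW1) (f : X -> baire) : Prop :=
  match a with
  | Ctbl b => BaireClass T b f
  | Omega1 => exists (b : nat -> Ord) (g : nat -> X -> baire),
      (forall n, BaireClass T (b n) (g n)) /\ converges_pointwise g f
  end.

Inductive borel_set (X : Type) (T : topology X) : (X -> Prop) -> Prop :=
| borel_open : forall U, is_open T U -> borel_set T U
| borel_compl : forall U, borel_set T U -> borel_set T (fun x => ~ U x)
| borel_cunion : forall F : nat -> X -> Prop,
    (forall n, borel_set T (F n)) -> borel_set T (fun x => exists n, F n x)
| borel_ext : forall U V, borel_set T U -> (forall x, U x <-> V x) -> borel_set T V.

Definition borel_fun (X : Type) (T : topology X) (f : X -> baire) : Prop :=
  forall U, baire_open U -> borel_set T (fun x => U (f x)).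

Definition bounded (Y : baire -> Prop) : Prop :=
  exists g : baire, forall f, Y f -> exists N, forall n, N <= n -> f n <= g n.

Definition image (X : Type) (f : X -> baire) : baire -> Prop :=
  fun y => exists x, f x = y.

(* Main.v *)
Require Import Defs.
From Stdlib Require Import Classical ClassicalEpsilon FunctionalExtensionality PropExtensionality Lia Arith Cantor.

Lemma open_ext (X : Type) (T : topology X) (U V : X -> Prop) :
  is_open T U -> (forall x, U x <-> V x) -> is_open T V.
Proof.
  intros HU H. assert (U = V) as <-; auto.
  apply functional_extensionality; intro x; apply propositional_extensionality; auto.
Qed.

Lemma open_empty (X : Type) (T : topology X) : is_open T (fun _ => False).
Proof.
  apply open_ext with (U := fun x => exists i : False, (fun (i:False) (_:X) => True) i x).
  - apply open_union; intros [].
  - intros x; split; [intros [[] _] | intros []].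
Qed.

Lemma open_const (X : Type) (T : topology X) (P : Prop) : is_open T (fun _ => P).
Proof.
  destruct (classic P) as [H|H].
  - apply open_ext with (U := fun _ : X => True); [apply open_full | tauto].
  - apply open_ext with (U := fun _ : X => False); [apply open_empty | tauto].
Qed.

Lemma open_or (X : Type) (T : topology X) U V :
  is_open T U -> is_open T V -> is_open T (fun x => U x \/ V x).
Proof.
  intros HU HV.
  apply open_ext with (U := fun x => exists b : bool, (fun (b:bool) => if b then U else V) b x).
  - apply open_union; intros []; auto.
  - intros x; split.
    + intros [[|] H]; auto.
    + intros [H|H]; [exists true | exists false]; auto.
Qed.

Lemma open_and_const (X : Type) (T : topology X) (P : Prop) U :
  is_open T U -> is_open T (fun x => P /\ U x).
Proof. intros; apply open_inter; auto; apply open_const. Qed.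

Lemma clopen_ext (X : Type) (T : topology X) (U V : X -> Prop) :
  is_clopen T U -> (forall x, U x <-> V x) -> is_clopen T V.
Proof.
  intros [H1 H2] H; split.
  - eapply open_ext; [exact H1 | exact H].
  - eapply open_ext; [apply H2|]. intro x; specialize (H x); tauto.
Qed.

Lemma clopen_const (X : Type) (T : topology X) (P : Prop) : is_clopen T (fun _ => P).
Proof. split; apply open_const. Qed.

Lemma clopen_compl (X : Type) (T : topology X) U :
  is_clopen T U -> is_clopen T (fun x => ~ U x).
Proof.
  intros [H1 H2]; split; auto. eapply open_ext; [apply H1|]. intro; split; [tauto|apply NNPP].
Qed.

Lemma clopen_and (X : Type) (T : topology X) U V :
  is_clopen T U -> is_clopen T V -> is_clopen T (fun x => U x /\ V x).
Proof.
  intros [H1 H2] [H3 H4]; split.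
  - apply open_inter; auto.
  - eapply open_ext; [apply open_or; [exact H2|exact H4]|]. intro x; tauto.
Qed.

Lemma clopen_or (X : Type) (T : topology X) U V :
  is_clopen T U -> is_clopen T V -> is_clopen T (fun x => U x \/ V x).
Proof.
  intros [H1 H2] [H3 H4]; split.
  - apply open_or; auto.
  - eapply open_ext; [apply open_inter; [exact H2|exact H4]|]. intro x; tauto.
Qed.

Lemma clopen_ex_le (X : Type) (T : topology X) (C : nat -> X -> Prop) k :
  (forall j, is_clopen T (C j)) -> is_clopen T (fun x => exists j, j <= k /\ C j x).
Proof.
  intros HC; induction k.
  - eapply clopen_ext; [apply (HC 0)|]. intro x; split.
    + intros; exists 0; split; auto.
    + intros [j [Hj H]]; replace 0 with j by lia; auto.
  - eapply clopen_ext; [apply clopen_or; [exact IHk|exact (HC (S k))]|]. intro x; split.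
    + intros [[j [Hj H]]|H]; [exists j; split; [lia|auto] | exists (S k); auto].
    + intros [j [Hj H]]. destruct (Nat.eq_dec j (S k)); [subst; auto | left; exists j; split; [lia|auto]].
Qed.

Lemma clopen_all_le (X : Type) (T : topology X) (C : nat -> X -> Prop) k :
  (forall j, is_clopen T (C j)) -> is_clopen T (fun x => forall j, j <= k -> C j x).
Proof.
  intros HC.
  eapply clopen_ext; [apply clopen_compl, (clopen_ex_le X T (fun j x => ~ C j x) k (fun j => clopen_compl X T _ (HC j)))|].
  intro x; split.
  - intros H j Hj. apply NNPP; intro; apply H; exists j; auto.
  - intros H [j [Hj Hn]]; auto.
Qed.

Lemma clopen_imp_const (X : Type) (T : topology X) (P : Prop) U :
  is_clopen T U -> is_clopen T (fun x => P -> U x).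
Proof.
  intros HU. destruct (classic P) as [H|H].
  - eapply clopen_ext; [apply HU|]; intro; tauto.
  - eapply clopen_ext; [apply (@clopen_const X T True)|]; intro; tauto.
Qed.

Lemma least_ex (P : nat -> Prop) : (exists j, P j) -> exists j, P j /\ forall j', j' < j -> ~ P j'.
Proof.
  intros [j Hj]. apply NNPP; intro Hno.
  assert (forall n j, j <= n -> ~ P j) as K.
  { induction n; intros j' Hj' Hp.
    - apply Hno; exists j'; split; auto; intros; lia.
    - destruct (Nat.eq_dec j' (S n)).
      + subst. apply Hno; exists (S n); split; auto. intros j'' Hj''; apply IHn; lia.
      + apply (IHn j'); auto; lia. }
  apply (K j j); auto.
Qed.

Lemma fin_bound (P : nat -> nat -> Prop) k :
  (forall j, j < k -> exists m, P j m) -> exists M, forall j, j < k -> exists m, m <= M /\ P j m.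
Proof.
  induction k; intros H.
  - exists 0; intros; lia.
  - destruct IHk as [M HM]. { intros; apply H; lia. }
    destruct (H k) as [m Hm]; [lia|].
    exists (max M m); intros j Hj.
    destruct (Nat.eq_dec j k).
    + subst; exists m; split; [lia|auto].
    + destruct (HM j) as [m' [Hm' Hp]]; [lia|]. exists m'; split; [lia|auto].
Qed.

Definition dec (P : Prop) : bool := if excluded_middle_informative P then true else false.
Lemma dec_true P : dec P = true <-> P.
Proof. unfold dec; destruct (excluded_middle_informative P); split; auto; discriminate. Qed.
Lemma dec_false P : dec P = false <-> ~ P.
Proof. unfold dec; destruct (excluded_middle_informative P); split; auto; try tauto; discriminate. Qed.

Fixpoint lfind (p : nat -> bool) (i : nat) : nat :=
  match i with 0 => 0 | S i' => if p 0 then 0 else S (lfind (fun j => p (S j)) i') end.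

Lemma lfind_le p i : lfind p i <= i.
Proof. revert p; induction i; intros p; simpl; [lia|]. destruct (p 0); [lia|]. specialize (IHi (fun j => p (S j))); lia. Qed.

Lemma lfind_true p i : lfind p i < i -> p (lfind p i) = true.
Proof.
  revert p; induction i; intros p; simpl; [lia|].
  destruct (p 0) eqn:E; auto. intros H. apply (IHi (fun j => p (S j))). lia.
Qed.

Lemma lfind_min p i j : j < lfind p i -> p j = false.
Proof.
  revert p j; induction i; intros p j; simpl; [lia|].
  destruct (p 0) eqn:E; [lia|]. destruct j; auto. intros H. apply (IHi (fun j => p (S j))). lia.
Qed.

Lemma lfind_iff p i c : lfind p i = c <->
  ((c < i /\ p c = true /\ forall j, j < c -> p j = false) \/ (c = i /\ forall j, j < i -> p j = false)).
Proof.
  split.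
  - intros <-. pose proof (lfind_le p i). destruct (Nat.eq_dec (lfind p i) i).
    + right; split; auto. intros j Hj; apply (lfind_min p i); lia.
    + left; repeat split; [lia| apply lfind_true; lia | intros j Hj; apply (lfind_min p i); auto].
  - intros H. pose proof (lfind_le p i).
    destruct (lt_eq_lt_dec (lfind p i) c) as [[Hl|He]|Hg]; auto.
    + exfalso. destruct H as [[Hci [Hc Hall]] | [Hc Hall]].
      * pose proof (lfind_true p i ltac:(lia)). rewrite Hall in H; [discriminate|lia].
      * pose proof (lfind_true p i ltac:(lia)). rewrite Hall in H; [discriminate|lia].
    + exfalso. destruct H as [[_ [Hc _]] | [Hc Hall]].
      * rewrite (lfind_min p i c) in Hc; [discriminate|lia].
      * lia.
Qed.

Lemma open_all_lt (X : Type) (T : topology X) (O : nat -> X -> Prop) k :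
  (forall i, is_open T (O i)) -> is_open T (fun x => forall i, i < k -> O i x).
Proof.
  intros HO; induction k.
  - eapply open_ext; [apply open_full|]. intro; split; auto; intros; lia.
  - eapply open_ext; [apply open_inter; [exact IHk | exact (HO k)]|].
    intro x; split.
    + intros [H1 H2] i Hi. destruct (Nat.eq_dec i k); [subst; auto | apply H1; lia].
    + intros H; split; auto.
Qed.

Lemma cont_of_levels (X : Type) (T : topology X) (f : X -> baire) :
  (forall n c, is_open T (fun x => f x n = c)) -> continuous T f.
Proof.
  intros H U HU.
  set (I := {p : X * nat | U (f (fst p)) /\ forall h, agree_upto (snd p) (f (fst p)) h -> U h}).
  eapply open_ext with (U := fun x => exists p : I, (fun (p : I) x => forall i, i < snd (proj1_sig p) -> f x i = f (fst (proj1_sig p)) i) p x).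
  - apply open_union; intros p. apply open_all_lt; intros i; apply H.
  - intros x; split.
    + intros [[[x0 k] [H1 H2]] Hx]. simpl in *. apply H2. intros i Hi; symmetry; auto.
    + intros Hx. destruct (HU _ Hx) as [k Hk].
      unshelve eexists. { exists (x, k); simpl; split; auto. } simpl. auto.
Qed.

Definition Blim (X : Type) (T : topology X) : Prop :=
  forall Phi : X -> baire, (exists g : nat -> X -> baire, (forall i, continuous T (g i)) /\ converges_pointwise g Phi) -> bounded (image Phi).

Arguments Blim {X} T.

Lemma cover (X : Type) (T : topology X) (HB : Blim T)
  (E : nat -> nat -> nat -> X -> Prop) (HE : forall n j i, is_clopen T (E n j i))
  (Hcov : forall x n, exists j, forall i, E n j i x) :
  exists g : baire, forall x, exists N, forall n, N <= n -> exists j, j <= g n /\ forall i, E n j i x.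
Proof.
  set (Q := fun n j i x => forall i', i' <= i -> E n j i' x).
  assert (HQ : forall n j i, is_clopen T (Q n j i)) by (intros; apply clopen_all_le; auto).
  set (G := fun i x n => lfind (fun j => dec (Q n j i x)) i).
  assert (claim : forall x n, exists j, (forall i, E n j i x) /\ exists N, forall i, N <= i -> G i x n = j).
  { intros x n. destruct (least_ex _ (Hcov x n)) as [j0 [Hj0 Hmin]].
    destruct (fin_bound (fun j m => ~ E n j m x) j0) as [M HM].
    { intros j Hj. specialize (Hmin j Hj). apply NNPP; intro C; apply Hmin; intro i.
      apply NNPP; intro C'; apply C; exists i; auto. }
    exists j0; split; auto. exists (max (S j0) M). intros i Hi.
    unfold G. apply lfind_iff. left. split; [lia|split].
    - apply dec_true. intros i' _; auto.
    - intros j Hj. apply dec_false. intros HQj. destruct (HM j Hj) as [m [Hm Hn]].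
      apply Hn, HQj; lia. }
  set (f := fun x n => proj1_sig (constructive_indefinite_description _ (claim x n))).
  assert (Hf : forall x n, (forall i, E n (f x n) i x) /\ exists N, forall i, N <= i -> G i x n = f x n).
  { intros x n. unfold f. destruct (constructive_indefinite_description _ (claim x n)); simpl; auto. }
  destruct (HB f) as [g Hg].
  { exists G; split.
    - intros i. apply cont_of_levels. intros n c.
      eapply open_ext with (U := fun x => (c < i /\ Q n c i x /\ forall j, j <= c -> j < c -> ~ Q n j i x)
                                       \/ (c = i /\ forall j, j <= i -> j < i -> ~ Q n j i x)).
      + apply open_or; apply open_and_const.
        * apply clopen_and; [apply HQ|]. apply clopen_all_le; intros j; apply clopen_imp_const, clopen_compl, HQ.
        * apply clopen_all_le; intros j; apply clopen_imp_const, clopen_compl, HQ.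
      + intros x. unfold G. rewrite lfind_iff. rewrite dec_true.
        split.
        * intros [[H1 [H2 H3]]|[H1 H2]]; [left|right]; repeat split; auto;
            intros j Hj; apply dec_false; [apply H3|apply H2]; auto; lia.
        * intros [[H1 [H2 H3]]|[H1 H2]]; [left|right]; repeat split; auto;
            intros j _ Hj; apply dec_false; auto.
    - intros x k. destruct (Hf x k) as [_ [N HN]]. exists N; auto. }
  exists g. intros x. destruct (Hg (f x)) as [N HN]; [exists x; auto|].
  exists N. intros n Hn. exists (f x n); split; auto. apply Hf.
Qed.

Definition Sig2 (X : Type) (T : topology X) (S : X -> Prop) : Prop :=
  exists E : nat -> nat -> X -> Prop, (forall m i, is_clopen T (E m i)) /\
    forall x, S x <-> exists m, forall i, E m i x.
Arguments Sig2 {X} T S.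

Lemma fst_of_nat_le j : fst (of_nat j) <= j.
Proof.
  rewrite <- (cancel_to_of j) at 2. destruct (of_nat j) as [a b].
  pose proof (to_nat_non_decreasing a b). simpl fst. lia.
Qed.

Lemma gdelta (X : Type) (T : topology X) (HB : Blim T) (C : nat -> nat -> X -> Prop) :
  (forall m j, is_clopen T (C m j)) -> Sig2 T (fun x => forall m, exists j, C m j x).
Proof.
  intros HC.
  set (mm := fun n => fst (of_nat n)).
  destruct (cover X T HB (fun n j i x => C (mm n) j x \/ ~ C (mm n) i x)) as [g Hg].
  - intros; apply clopen_or; [apply HC | apply clopen_compl, HC].
  - intros x n. destruct (classic (exists j, C (mm n) j x)) as [[j Hj]|Hn].
    + exists j; auto.
    + exists 0; intros i; right; intro; apply Hn; eauto.
  - exists (fun N n x => N <= n -> exists j, j <= g n /\ C (mm n) j x). split.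
    + intros; apply clopen_imp_const, clopen_ex_le; auto.
    + intros x; split.
      * intros Hx. destruct (Hg x) as [N HN]. exists N; intros n Hn.
        destruct (HN n Hn) as [j [Hj HE]]. exists j; split; auto.
        destruct (Hx (mm n)) as [j1 Hj1]. destruct (HE j1); tauto.
      * intros [N HN] m. destruct (HN (to_nat (m, N))) as [j [_ Hj]].
        { pose proof (to_nat_non_decreasing m N); lia. }
        exists j. unfold mm in Hj. rewrite cancel_of_to in Hj. auto.
Qed.

Lemma sig2_ext (X : Type) (T : topology X) (U V : X -> Prop) :
  Sig2 T U -> (forall x, U x <-> V x) -> Sig2 T V.
Proof. intros [E [H1 H2]] H; exists E; split; auto; intro x; rewrite <- H; auto. Qed.

Lemma sig2_compl (X : Type) (T : topology X) (HB : Blim T) (U : X -> Prop) :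
  Sig2 T U -> Sig2 T (fun x => ~ U x).
Proof.
  intros [E [H1 H2]].
  eapply sig2_ext; [apply (gdelta X T HB (fun m i x => ~ E m i x)); intros; apply clopen_compl, H1|].
  intros x; rewrite H2. split.
  - intros H [m Hm]. destruct (H m) as [i Hi]; auto.
  - intros H m. apply NNPP; intro C; apply H; exists m; intro i; apply NNPP; intro; apply C; eauto.
Qed.

Lemma sig2_union (X : Type) (T : topology X) (F : nat -> X -> Prop) :
  (forall n, Sig2 T (F n)) -> Sig2 T (fun x => exists n, F n x).
Proof.
  intros HF.
  set (E := fun n => proj1_sig (constructive_indefinite_description _ (HF n))).
  assert (HE : forall n, (forall m i, is_clopen T (E n m i)) /\ forall x, F n x <-> exists m, forall i, E n m i x).
  { intros n; unfold E; destruct (constructive_indefinite_description _ (HF n)); simpl; auto. }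
  exists (fun k i x => E (fst (of_nat k)) (snd (of_nat k)) i x). split.
  - intros; apply HE.
  - intros x; split.
    + intros [n Hn]. apply HE in Hn. destruct Hn as [m Hm]. exists (to_nat (n, m)).
      rewrite cancel_of_to; auto.
    + intros [k Hk]. exists (fst (of_nat k)). apply HE. eauto.
Qed.

Lemma borel_sig2 (X : Type) (T : topology X) (HX : open_countable_union_clopen T) (HB : Blim T)
  (U : X -> Prop) : borel_set T U -> Sig2 T U.
Proof.
  induction 1.
  - destruct (HX U H) as [C [HC HU]]. exists (fun m _ => C m); split; auto.
    intros x; rewrite HU; split; intros [n Hn]; exists n; auto.
  - apply sig2_compl; auto.
  - apply sig2_union; auto.
  - eapply sig2_ext; eauto.
Qed.

Lemma dir12 (X : Type) (T : topology X) (HX : open_countable_union_clopen T) (HB : Blim T)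
  (Psi : X -> baire) : borel_fun T Psi -> bounded (image Psi).
Proof.
  intros HP.
  assert (HA : forall n k, Sig2 T (fun x => Psi x n = k)).
  { intros n k. apply borel_sig2; auto. apply (HP (fun y => y n = k)).
    intros y Hy. exists (S n). intros h Hh. rewrite <- Hh; auto. }
  set (E := fun n k => proj1_sig (constructive_indefinite_description _ (HA n k))).
  assert (HE : forall n k, (forall m i, is_clopen T (E n k m i)) /\ forall x, Psi x n = k <-> exists m, forall i, E n k m i x).
  { intros n k; unfold E; destruct (constructive_indefinite_description _ (HA n k)); simpl; auto. }
  destruct (cover X T HB (fun n j i x => E n (fst (of_nat j)) (snd (of_nat j)) i x)) as [g Hg].
  - intros; apply HE.
  - intros x n. destruct (proj1 (proj2 (HE n (Psi x n)) x) eq_refl) as [m Hm].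
    exists (to_nat (Psi x n, m)). rewrite cancel_of_to; auto.
  - exists g. intros y [x <-]. destruct (Hg x) as [N HN]. exists N. intros n Hn.
    destruct (HN n Hn) as [j [Hj HEj]].
    assert (Psi x n = fst (of_nat j)) as ->. { apply HE. eauto. }
    pose proof (fst_of_nat_le j). lia.
Qed.

Lemma borel_const (X : Type) (T : topology X) (P : Prop) : borel_set T (fun _ => P).
Proof. apply borel_open, open_const. Qed.

Lemma borel_all (X : Type) (T : topology X) (S : nat -> X -> Prop) :
  (forall i, borel_set T (S i)) -> borel_set T (fun x => forall i, S i x).
Proof.
  intros H. eapply borel_ext.
  - apply borel_compl, borel_cunion. intros n; apply borel_compl, H.
  - intros x; split.
    + intros Hn i. apply NNPP; intro; apply Hn; eauto.
    + intros Ha [n Hn]; auto.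
Qed.

Lemma borel_and (X : Type) (T : topology X) (U V : X -> Prop) :
  borel_set T U -> borel_set T V -> borel_set T (fun x => U x /\ V x).
Proof.
  intros HU HV. eapply borel_ext; [apply (borel_all X T (fun i => match i with 0 => U | _ => V end))|].
  - intros [|i]; auto.
  - intros x; split; [intros H; split; [apply (H 0)|apply (H 1)] | intros [H1 H2] [|i]; auto].
Qed.

Lemma borel_imp_const (X : Type) (T : topology X) (P : Prop) U :
  borel_set T U -> borel_set T (fun x => P -> U x).
Proof.
  intros HU. destruct (classic P) as [H|H].
  - eapply borel_ext; [apply HU|]; intro; tauto.
  - eapply borel_ext; [apply (borel_const X T True)|]; intro; tauto.
Qed.

Lemma borel_dep (X : Type) (T : topology X) (f : X -> baire)
  (Hf : forall n c, borel_set T (fun x => f x n = c)) :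
  forall k (P : baire -> Prop), (forall y y', agree_upto k y y' -> P y -> P y') ->
    borel_set T (fun x => P (f x)).
Proof.
  induction k; intros P HP.
  - destruct (classic (P (fun _ => 0))) as [H|H].
    + eapply borel_ext; [apply (borel_const X T True)|]. intros x; split; auto.
      intros _; apply (HP (fun _ => 0)); auto. intros i Hi; lia.
    + eapply borel_ext; [apply (borel_const X T False)|]. intros x; split; [tauto|].
      intros Hx; apply H; apply (HP (f x)); auto. intros i Hi; lia.
  - set (Q := fun c y => P (fun i => if i <? k then y i else c)).
    eapply borel_ext; [apply borel_cunion with (F := fun c x => f x k = c /\ Q c (f x))|].
    + intros c. apply borel_and; auto. apply IHk.
      intros y y' Hyy' Hy. unfold Q in *. eapply HP; [|exact Hy].
      intros i Hi. destruct (i <? k) eqn:E; auto. apply Nat.ltb_lt in E; auto.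
    + intros x; split.
      * intros [c [Hc HQ]]. unfold Q in HQ. eapply HP; [|exact HQ].
        intros i Hi. destruct (i <? k) eqn:E; auto. apply Nat.ltb_ge in E.
        replace i with k by lia; auto.
      * intros Hx. exists (f x k); split; auto. unfold Q. eapply HP; [|exact Hx].
        intros i Hi. destruct (i <? k) eqn:E; auto. apply Nat.ltb_ge in E.
        replace i with k by lia; auto.
Qed.

Lemma borel_fun_of_levels (X : Type) (T : topology X) (f : X -> baire) :
  (forall n c, borel_set T (fun x => f x n = c)) -> borel_fun T f.
Proof.
  intros Hf U HU.
  eapply borel_ext; [apply borel_cunion with (F := fun k x => forall h, agree_upto k (f x) h -> U h)|].
  - intros k. apply (borel_dep X T f Hf k (fun y => forall h, agree_upto k y h -> U h)).
    intros y y' Hyy' Hy h Hh. apply Hy. intros i Hi. rewrite Hyy'; auto.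
  - intros x; split.
    + intros [k Hk]. apply Hk. intros i Hi; auto.
    + intros Hx. apply HU; auto.
Qed.

Lemma levels_lim (X : Type) (T : topology X) (g : nat -> X -> baire) (f : X -> baire) :
  (forall i n c, borel_set T (fun x => g i x n = c)) -> converges_pointwise g f ->
  forall n c, borel_set T (fun x => f x n = c).
Proof.
  intros Hg Hc n c.
  eapply borel_ext; [apply borel_cunion with (F := fun N x => forall i, N <= i -> g i x n = c)|].
  - intros N. apply borel_all. intros i. apply borel_imp_const, Hg.
  - intros x; split.
    + intros [N HN]. destruct (Hc x n) as [M HM]. rewrite <- (HM (max N M)) by lia. apply HN; lia.
    + intros <-. apply Hc.
Qed.

Lemma baire_levels (X : Type) (T : topology X) (a : Ord) (f : X -> baire) :
  BaireClass T a f -> forall n c, borel_set T (fun x => f x n = c).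
Proof.
  induction 1.
  - intros n c. apply borel_open. apply (H0 (fun y => y n = c)).
    intros y Hy. exists (S n). intros h Hh. rewrite <- Hh; auto.
  - eapply levels_lim; eauto.
Qed.

Lemma dir21 (X : Type) (T : topology X) (alpha : OrdW1) (f : X -> baire) :
  BaireClassW T alpha f -> borel_fun T f.
Proof.
  intros H. apply borel_fun_of_levels. destruct alpha as [b|]; simpl in H.
  - eapply baire_levels; eauto.
  - destruct H as [b [g [Hg Hc]]]. eapply levels_lim; eauto.
    intros i; eapply baire_levels; eauto.
Qed.

Theorem mainTheorem16 (X : Type) (T : topology X)
  (HX : open_countable_union_clopen T)
  (alpha : OrdW1) (Halpha : ordW1_pos alpha) :
  (forall Psi : X -> baire, BaireClassW T alpha Psi -> bounded (image Psi)) <->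
  (forall Psi : X -> baire, borel_fun T Psi -> bounded (image Psi)).
Proof.
  split.
  - intros H1. apply dir12; auto.
    intros Phi [g [Hg Hc]]. apply H1.
    destruct alpha as [b|]; simpl in *.
    + apply bc_lim with (b := fun _ => OZ) (g := g); auto.
      intros n; apply bc_zero; auto. constructor.
    + exists (fun _ => OZ), g; split; auto. intros n; apply bc_zero; auto. constructor.
  - intros H2 Psi HP. apply H2. eapply dir21; eauto.
Qed.
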